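(* Let $(\mathcal{A},e)$ be an order-unit space and $L$ any Lipschitz seminorm on $\mathcal{A}$, with metric $\rho_L$ on $S(\mathcal{A})$. For $a\in\mathcal{A}$ set $$L_{\rho_L}(a)=\sup\{|\mu(a)-\nu(a)|/\rho_L(\mu,\nu):\ \mu,\nu\in S(\mathcal{A}),\ \mu\ne\nu\}.$$ Then $\{a\in\mathcal{A}: L_{\rho_L}(a)\le 1\}$ coincides with the norm closure in $\mathcal{A}$ of $\mathcal{L}_1=\{a\in\mathcal{A}: L(a)\le1\}$. In particular, $L_{\rho_L}$ is the largest lower semicontinuous seminorm on $\mathcal{A}$ which is $\le L$, and $\rho_{L_{\rho_L}}=\rho_L$.
   Context: An order-unit space is a real partially ordered vector space $\mathcal{A}$ with a distinguished element $e$ such that (i) for each $a$ there is $r\in\mathbb{R}$ with $a\le re$, and (ii) if $a\le re$ for all $r>0$ then $a\le0$; norm $\|a\|=\inf\{r\ge0:-re\le a\le re\}$ (not necessarily complete). A state is a continuous linear functional $\mu$ with $\mu(e)=1=\|\mu\|$; $S(\mathcal{A})$ is the set of states. A Lipschitz seminorm is a finite-valued seminorm $L$ on $\mathcal{A}$ with $L(a)=0$ iff $a\in\mathbb{R}e$. For a seminorm $M$ on $\mathcal{A}$ (possibly $+\infty$-valued) set $\rho_M(\mu,\nu)=\sup\{|\mu(a)-\nu(a)|: M(a)\le1\}\in[0,\infty]$. A seminorm is lower semicontinuous if $\{a: M(a)\le1\}$ is norm-closed. In the supremum defining $L_{\rho_L}$, quotients with denominator $+\infty$ are taken to be $0$.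 *)

(* Defs.v *)
From HB Require Import structures.
From mathcomp Require Import all_boot all_order all_algebra.
From mathcomp Require Import all_classical all_reals all_analysis.
Set Implicit Arguments. Unset Strict Implicit. Unset Printing Implicit Defensive.
Import Order.TTheory GRing.Theory Num.Theory.
Local Open Scope classical_set_scope.
Local Open Scope ring_scope.

Section OUS.
Variables (R : realType) (V : lmodType R).

Definition order_unit_space (le : V -> V -> Prop) (e : V) : Prop :=
  (forall a, le a a) /\
  (forall a b, le a b -> le b a -> a = b) /\
  (forall a b c, le a b -> le b c -> le a c) /\
  (forall a b c, le a b -> le (a + c) (b + c)) /\
  (forall a b (r : R), 0 <= r -> le a b -> le (r *: a) (r *: b)) /\
  (forall a, exists r : R, le a (r *: e)) /\
  (forall a, (forall r : R, 0 < r -> le a (r *: e)) -> le a 0).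

Definition ou_norm (le : V -> V -> Prop) (e : V) (a : V) : R :=
  inf [set r : R | 0 <= r /\ le (- (r *: e)) a /\ le a (r *: e)].

(* states: continuous (= bounded for the order-unit norm) linear functionals
   mu with mu e = 1 = ||mu|| (operator norm). *)
Definition is_state (le : V -> V -> Prop) (e : V) (mu : V -> R) : Prop :=
  [/\ (forall (r : R) a b, mu (r *: a + b) = r * mu a + mu b),
      (exists C : R, forall a, `|mu a| <= C * ou_norm le e a),
      mu e = 1 &
      sup [set `|mu a| | a in [set a | ou_norm le e a <= 1]] = 1].

Definition states (le : V -> V -> Prop) (e : V) : set (V -> R) :=
  [set mu | is_state le e mu].

Definition lipschitz_seminorm (e : V) (L : V -> R) : Prop :=
  [/\ (forall a b, L (a + b) <= L a + L b),
      (forall (r : R) a, L (r *: a) = `|r| * L a) &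
      (forall a, L a = 0 <-> exists r : R, a = r *: e)].

Definition ext_seminorm (M : V -> \bar R) : Prop :=
  [/\ (forall a, lee 0%E (M a)),
      (forall a b : V, lee (M (a + b)) (adde (M a) (M b))) &
      (forall (r : R) a, M (r *: a) = mule (`|r|%:E) (M a))].

Definition rho (M : V -> \bar R) (mu nu : V -> R) : \bar R :=
  ereal_sup [set (`|mu a - nu a|)%:E | a in [set a | lee (M a) 1%E]].

(* |x| / d with the convention |x| / +oo = 0 *)
Definition quot (x : R) (d : \bar R) : \bar R :=
  match d with
  | r%:E => (`|x| / r)%:E
  | _ => 0%E
  end.

(* L_rho(a) = sup { |mu a - nu a| / rho(mu,nu) : mu, nu states, mu <> nu }
   (supremum of the empty family taken to be 0). *)
Definition L_of_rho (le : V -> V -> Prop) (e : V) (rh : (V -> R) -> (V -> R) -> \bar R)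
  (a : V) : \bar R :=
  ereal_sup (0%E |` [set q | exists mu nu : V -> R,
     [/\ states le e mu, states le e nu, mu <> nu &
          q = quot (mu a - nu a) (rh mu nu)]]).

Definition norm_closure (le : V -> V -> Prop) (e : V) (B : set V) : set V :=
  [set a | forall eps : R, 0 < eps -> exists2 b, B b & ou_norm le e (a - b) < eps].

Definition ou_lsc (le : V -> V -> Prop) (e : V) (M : V -> \bar R) : Prop :=
  norm_closure le e [set a | lee (M a) 1%E] `<=` [set a | lee (M a) 1%E].

End OUS.

(* Main.v *)
Require Import Defs.
From HB Require Import structures.
From mathcomp Require Import all_boot all_order all_algebra.
From mathcomp Require Import all_classical all_reals all_analysis.
From mathcomp Require Import lra.
Import Order.TTheory GRing.Theory Num.Theory.
Local Open Scope classical_set_scope.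
Local Open Scope ring_scope.
Set Implicit Arguments. Unset Strict Implicit. Unset Printing Implicit Defensive.

Section HBsec.
Variables (R : realType) (V : lmodType R).
Variable U : V -> set R.
Hypothesis Une : forall x, exists m, U x m.
Hypothesis UD : forall x y m n, U x m -> U y n -> U (x + y) (m + n).
Hypothesis UZ : forall t x m, 0 < t -> U x m -> U (t *: x) (t * m).
Hypothesis U0 : forall m, U 0 m -> 0 <= m.

Definition okG (G : set (V * R)) :=
  [/\ (forall x r y s, G (x, r) -> G (y, s) -> G (x + y, r + s)),
      (forall t x r, G (x, r) -> G (t *: x, t * r)),
      (forall x r s, G (x, r) -> G (x, s) -> r = s) &
      (forall x r m, G (x, r) -> U x m -> r <= m)].

Lemma okG_chain (F : set (set (V * R))) :
  F `<=` okG -> total_on F subset -> okG (\bigcup_(X in F) X).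
Proof.
move=> FP tot; split.
- move=> x r y s [A FA Axr] [B FB Bys].
  have [AB|BA] := tot _ _ FA FB.
  + exists B => //; have [Ha _ _ _] := FP _ FB; exact: Ha (AB _ Axr) Bys.
  + exists A => //; have [Ha _ _ _] := FP _ FA; exact: Ha Axr (BA _ Bys).
- move=> t x r [A FA Axr]; exists A => //; have [_ Hs _ _] := FP _ FA; exact: Hs.
- move=> x r s [A FA Axr] [B FB Bys].
  have [AB|BA] := tot _ _ FA FB.
  + have [_ _ Hf _] := FP _ FB; exact: Hf (AB _ Axr) Bys.
  + have [_ _ Hf _] := FP _ FA; exact: Hf Axr (BA _ Bys).
- move=> x r m [A FA Axr]; have [_ _ _ Hd] := FP _ FA; exact: Hd.
Qed.

Lemma HB_ext : exists psi : V -> R,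
  (forall (r : R) x y, psi (r *: x + y) = r * psi x + psi y) /\
  (forall x m, U x m -> psi x <= m).
Proof.
have [G [[Gadd Gsc Gfun Gdom] Gmax]] := Zorn_bigcup okG_chain.
have G00 : G (0, 0).
  apply: contrapT => nG.
  pose Gz := fun p => G p \/ p = (0, 0).
  apply: (Gmax Gz); first split.
  - by move=> p Gp; left.
  - by move=> /(_ (0, 0) (or_intror erefl)).
  split.
  - move=> x r y s [Gxr|[-> ->]] [Gys|[-> ->]].
    + by left; apply: Gadd.
    + by left; rewrite !addr0.
    + by left; rewrite !add0r.
    + by right; rewrite !addr0.
  - move=> t x r [Gxr|[-> ->]]; first by left; apply: Gsc.
    by right; rewrite scaler0 mulr0.
  - have G0r : forall r, G (0, r) -> r = 0.
      move=> r G0r; have := Gsc 0 _ _ G0r; rewrite scale0r mul0r => G00.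
      by apply: Gfun _ _ _ G0r G00.
    move=> x r s [Gxr|e1] [Gxs|e2].
    + exact: Gfun _ _ _ Gxr Gxs.
    + by case: e2 Gxr => -> -> /G0r.
    + by case: e1 Gxs => -> -> /G0r ->.
    + by case: e1 e2 => -> -> [->].
  - move=> x r m [Gxr|[-> ->]]; first exact: Gdom.
    exact: U0.
have Gdom_all : forall x0, exists r, G (x0, r).
  move=> x0; apply: contrapT => nx0.
  have nG : forall r, ~ G (x0, r) by move=> r Gr; apply: nx0; exists r.
  pose A := [set v | exists z s m, [/\ G (z, s), U (z - x0) m & v = s - m]].
  have [m1 Um1] := Une (0 - x0).
  have [m2 Um2] := Une (0 + x0).
  have Ab : forall v z2 s2 m2, A v -> G (z2, s2) -> U (z2 + x0) m2 -> v <= m2 - s2.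
    move=> v z2 s2 m3 [z [s [m [Gzs Um ->]]]] Gz2 Um3.
    have := UD Um Um3.
    have -> : z - x0 + (z2 + x0) = z + z2 by rewrite addrCA subrK addrC.
    move=> U12; have := Gdom _ _ _ (Gadd _ _ _ _ Gzs Gz2) U12; lra.
  have hasA : has_sup A.
    split; first by exists (0 - m1), 0, 0, m1.
    by exists (m2 - 0) => v Av; apply: Ab Av G00 Um2.
  pose c := sup A.
  have P1 : forall v, A v -> v <= c by move=> v Av; apply: sup_upper_bound.
  have P2 : forall z2 s2 m3, G (z2, s2) -> U (z2 + x0) m3 -> c <= m3 - s2.
    move=> z2 s2 m3 Gz2 Um3; apply: ge_sup; first by case: hasA.
    by move=> v Av; apply: Ab Av Gz2 Um3.
  pose G' := fun p => exists y r l, G (y, r) /\ p = (y + l *: x0, r + l * c).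
  apply: (Gmax G'); first split.
  - move=> [y r] Gyr; exists y, r, 0; split => //.
    by rewrite scale0r mul0r !addr0.
  - move=> /(_ (x0, c)) H.
    have [y [r [l [Gyr [e1 e2]]]]] : G' (x0, c).
      by exists 0, 0, 1; rewrite scale1r mul1r !add0r.
    by apply: (nG c); apply: H; exists 0, 0, 1; rewrite scale1r mul1r !add0r.
  split.
  - move=> x r y s [y1 [r1 [l1 [G1 [-> ->]]]]] [y2 [r2 [l2 [G2 [-> ->]]]]].
    exists (y1 + y2), (r1 + r2), (l1 + l2); split; first exact: Gadd.
    congr (_, _); first by rewrite scalerDl addrACA.
    by rewrite mulrDl addrACA.
  - move=> t x r [y1 [r1 [l1 [G1 [-> ->]]]]].
    exists (t *: y1), (t * r1), (t * l1); split; first exact: Gsc.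
    by rewrite scalerDr scalerA mulrDr mulrA.
  - move=> x r s [y1 [r1 [l1 [G1 [-> ->]]]]] [y2 [r2 [l2 [G2 [ex ->]]]]].
    have [l12|l12] := eqVneq l1 l2.
      rewrite -l12 in ex *; move/addIr: ex => ey; rewrite -ey in G2.
      by rewrite (Gfun _ _ _ G1 G2).
    exfalso; apply: (nG ((l2 - l1)^-1 * (r1 - r2))).
    have Gd : G (y1 - y2, r1 - r2).
      apply: Gadd => //; have := Gsc (-1) _ _ G2.
      by rewrite scaleN1r mulN1r.
    have := Gsc (l2 - l1)^-1 _ _ Gd.
    have -> : y1 - y2 = (l2 - l1) *: x0.
      apply: (addIr (l1 *: x0)).
      rewrite -addrA [- y2 + _]addrC addrA ex addrC addKr scalerBl subrK //.
    rewrite scalerA mulVf ?scale1r //; by rewrite subr_eq0 eq_sym.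
  - move=> x r m [y [s [l [Gys [-> ->]]]]] Um.
    have [l0|l0|l0] := ltgtP l 0; last first.
    + rewrite l0 mul0r addr0; rewrite l0 scale0r addr0 in Um; exact: Gdom _ _ _ Gys Um.
    +
      have il : 0 < l^-1 by rewrite invr_gt0.
      have Um' := UZ il Um.
      rewrite scalerDr scalerA mulVf ?gt_eqF // scale1r in Um'.
      have := P2 _ _ _ (Gsc l^-1 _ _ Gys) Um'.
      rewrite -mulrBr => h.
      have := ler_wpM2l (ltW l0) h.
      rewrite mulrA mulfV ?gt_eqF // mul1r; lra.
    +
      have k0 : 0 < - l by rewrite oppr_gt0.
      have il : 0 < (- l)^-1 by rewrite invr_gt0.
      have Um' := UZ il Um.
      have e1 : (-l)^-1 * l = -1 by rewrite invrN mulNr mulVf ?lt_eqF.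
      rewrite scalerDr scalerA e1 scaleN1r in Um'.
      have h : (-l)^-1 * s - (-l)^-1 * m <= c.
        apply: P1; exists ((- l)^-1 *: y), ((-l)^-1 * s), ((-l)^-1 * m); split => //.
        exact: Gsc.
      rewrite -mulrBr in h.
      have := ler_wpM2l (ltW k0) h.
      rewrite mulrA mulfV ?gt_eqF // mul1r; lra.
have [psi Hpsi] := choice Gdom_all.
exists psi; split.
- move=> r x y; apply: (Gfun (r *: x + y)) => //.
  by apply: Gadd => //; apply: Gsc.
- by move=> x m Um; apply: Gdom _ _ _ (Hpsi x) Um.
Qed.
End HBsec.

Section Lin.
Variables (R : realType) (V : lmodType R).
Definition linf (f : V -> R) := forall (r : R) x y, f (r *: x + y) = r * f x + f y.
Variable f : V -> R.
Hypothesis hf : linf f.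
Lemma lin0 : f 0 = 0.
Proof. have := hf 1 0 0; rewrite scaler0 addr0 mul1r => h; lra. Qed.
Lemma linD x y : f (x + y) = f x + f y.
Proof. by rewrite -[x in LHS]scale1r hf mul1r. Qed.
Lemma linZ (r : R) x : f (r *: x) = r * f x.
Proof. by rewrite -[_ *: _]addr0 hf lin0 addr0. Qed.
Lemma linN x : f (- x) = - f x.
Proof. by rewrite -scaleN1r linZ mulN1r. Qed.
Lemma linB x y : f (x - y) = f x - f y.
Proof. by rewrite linD linN. Qed.
End Lin.


Section Quot.
Variable R : realType.
Lemma quot_ge0 (x : R) d : (0 <= d)%E -> (0 <= quot x d)%E.
Proof. by case: d => [r| |] //=; rewrite !lee_fin => r0; rewrite divr_ge0. Qed.

Lemma quot_D (x y : R) d : (0 <= d)%E -> (quot (x + y) d <= quot x d + quot y d)%E.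
Proof.
case: d => [r| |] //= r0; rewrite ?adde0 //.
rewrite -EFinD lee_fin -mulrDl; apply: ler_wpM2r; last exact: ler_normD.
by rewrite invr_ge0 -lee_fin.
Qed.

Lemma quot_Z (t x : R) d : quot (t * x) d = (`|t|%:E * quot x d)%E.
Proof. by case: d => [r| |] /=; rewrite ?mule0 // -EFinM normrM mulrA. Qed.
End Quot.

Section OU.
Variables (R : realType) (V : lmodType R) (le : V -> V -> Prop) (e : V) (L : V -> R).
Hypothesis hO : order_unit_space le e.
Hypothesis hL : lipschitz_seminorm e L.

Lemma le_rfl' a : le a a. Proof. by case: hO. Qed.
Lemma le_trans' a b c : le a b -> le b c -> le a c.
Proof. by case: hO => _ [_ [H _]]; apply: H. Qed.
Lemma le_addr a b c : le a b -> le (a + c) (b + c).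
Proof. by case: hO => _ [_ [_ [H _]]]; apply: H. Qed.
Lemma le_sc a b (r : R) : 0 <= r -> le a b -> le (r *: a) (r *: b).
Proof. by case: hO => _ [_ [_ [_ [H _]]]]; apply: H. Qed.
Lemma le_unit a : exists r : R, le a (r *: e).
Proof. by case: hO => _ [_ [_ [_ [_ [H _]]]]]; apply: H. Qed.
Lemma le_arch a : (forall r : R, 0 < r -> le a (r *: e)) -> le a 0.
Proof. by case: hO => _ [_ [_ [_ [_ [_ H]]]]]; apply: H. Qed.

Lemma le_addl a b c : le a b -> le (c + a) (c + b).
Proof. by move=> h; rewrite ![c + _]addrC; apply: le_addr. Qed.
Lemma leD2 a b c d : le a b -> le c d -> le (a + c) (b + d).
Proof. move=> h1 h2; apply: le_trans' (le_addr c h1) (le_addl b h2). Qed.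
Lemma le_subr0 a b : le a b -> le (a - b) 0.
Proof. by move=> h; rewrite -(subrr b); apply: le_addr. Qed.
Lemma le_0subr a b : le (a - b) 0 -> le a b.
Proof. by move=> h; have := le_addr b h; rewrite subrK add0r. Qed.
Lemma le_opp a b : le a b -> le (- b) (- a).
Proof.
move=> h; have := le_addr (- a - b) h.
by rewrite addrA subrr add0r addrCA subrr addr0.
Qed.

Definition bnd (r : R) (x : V) := le (- (r *: e)) x /\ le x (r *: e).

Lemma bnd_sc (t r : R) x : 0 <= t -> bnd r x -> bnd (t * r) (t *: x).
Proof.
move=> t0 [h1 h2]; split.
- by rewrite -scalerA -scalerN; apply: le_sc.
- by rewrite -scalerA; apply: le_sc.
Qed.
Lemma bnd_add r s x y : bnd r x -> bnd s y -> bnd (r + s) (x + y).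
Proof.
move=> [h1 h2] [h3 h4]; split; rewrite scalerDl; last exact: leD2.
by rewrite opprD; apply: leD2.
Qed.
Lemma bnd_N r x : bnd r x -> bnd r (- x).
Proof.
move=> [h1 h2]; split; first exact: le_opp.
by rewrite -[r *: e]opprK; apply: le_opp.
Qed.
Lemma bnd0 : bnd 0 0.
Proof. by rewrite /bnd scale0r oppr0; split; apply: le_rfl'. Qed.

Let N := ou_norm le e.
Let S x := [set r : R | 0 <= r /\ le (- (r *: e)) x /\ le x (r *: e)].

Lemma N_le r x : 0 <= r -> bnd r x -> N x <= r.
Proof.
move=> r0 [h1 h2]; rewrite /N /ou_norm; apply: ge_inf => //.
by exists 0 => y [y0 _].
Qed.

Lemma N_ge0 x : 0 <= N x.
Proof.
rewrite /N /ou_norm.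
have [[y Sy]|nS] := pselect ([set r : R | 0 <= r /\ le (- (r *: e)) x /\ le x (r *: e)] !=set0).
  by apply: lb_le_inf; [exists y|move=> z [z0 _]].
have -> : [set r : R | 0 <= r /\ le (- (r *: e)) x /\ le x (r *: e)] = set0.
  by apply/seteqP; split => // z Sz; apply: nS; exists z.
by rewrite inf0.
Qed.

Lemma L0 : L 0 = 0.
Proof. by case: hL => _ hZ _; have := hZ 0 0; rewrite scale0r normr0 mul0r. Qed.
Lemma LZ (r : R) a : L (r *: a) = `|r| * L a.
Proof. by case: hL => _ hZ _; apply: hZ. Qed.
Lemma LD a b : L (a + b) <= L a + L b.
Proof. by case: hL => hD _ _; apply: hD. Qed.
Lemma LN a : L (- a) = L a.
Proof. by rewrite -scaleN1r LZ normrN normr1 mul1r. Qed.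
Lemma L_ge0 a : 0 <= L a.
Proof. have := LD a (- a); rewrite subrr L0 LN; lra. Qed.
Lemma L_e (r : R) : L (r *: e) = 0.
Proof. by case: hL => _ _ hK; apply/hK; exists r. Qed.
Lemma L_ker a : L a = 0 -> exists r : R, a = r *: e.
Proof. by case: hL => _ _ hK; move/hK. Qed.


Section Pos.
Hypothesis he : le 0 e.

Lemma le_emono (r s : R) : r <= s -> le (r *: e) (s *: e).
Proof.
move=> rs; have sr : 0 <= s - r by rewrite subr_ge0.
have h : le 0 ((s - r) *: e) by have := le_sc sr he; rewrite scaler0.
by have := le_addr (r *: e) h; rewrite add0r -scalerDl subrK.
Qed.

Lemma bnd_ex x : exists r, 0 <= r /\ bnd r x.
Proof.
have [r1 h1] := le_unit x; have [r2 h2] := le_unit (- x).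
exists (`|r1| + `|r2|); split; first by rewrite addr_ge0.
split.
- rewrite -[x]opprK; apply: le_opp; apply: le_trans' h2 (le_emono _).
  by rewrite (le_trans (ler_norm r2)) // lerDr.
- apply: le_trans' h1 (le_emono _).
  by rewrite (le_trans (ler_norm r1)) // lerDl.
Qed.

Lemma N_adh y x : (forall d : R, 0 < d -> exists r, r < N x + d /\ le y (r *: e)) ->
  le y (N x *: e).
Proof.
move=> H; apply: le_0subr; apply: le_arch => d d0.
have [r [rlt hr]] := H d d0.
have := le_addr (- (N x *: e)) (le_trans' hr (le_emono (ltW rlt))).
by rewrite scalerDl addrAC subrr add0r.
Qed.

Lemma N_bnd x : bnd (N x) x.
Proof.
have hinf : has_inf (S x).
  split; first by have [r [r0 hr]] := bnd_ex x; exists r.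
  by exists 0 => y [y0 _].
have adh : forall d : R, 0 < d -> exists2 r, S x r & r < N x + d.
  by move=> d d0; apply: inf_adherent.
have up : le x (N x *: e).
  apply: N_adh => d d0.
  by have [r [r0 [h1 h2]] rlt] := adh d d0; exists r.
have un : le (- x) (N x *: e).
  apply: N_adh => d d0.
  have [r [r0 [h1 h2]] rlt] := adh d d0; exists r; split => //.
  by have := le_opp h1; rewrite opprK.
split => //; by have := le_opp un; rewrite opprK.
Qed.

Lemma N_e : N e <= 1.
Proof.
apply: N_le => //; rewrite /bnd scale1r; split; last exact: le_rfl'.
apply: le_trans' he; by have := le_opp he; rewrite oppr0.
Qed.

Definition posf (f : V -> R) := forall x, le x 0 -> f x <= 0.

Lemma pos_bound f r x : linf f -> posf f -> 0 <= r -> bnd r x -> `|f x| <= r * f e.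
Proof.
move=> lf pf r0 [h1 h2]; rewrite ler_norml; apply/andP; split.
- have := pf _ (le_subr0 h1); rewrite (linB lf) linN // (linZ lf); lra.
- have := pf _ (le_subr0 h2); rewrite (linB lf) (linZ lf); lra.
Qed.

Lemma pos_e f : linf f -> posf f -> 0 <= f e.
Proof.
move=> lf pf; have h := le_opp he; rewrite oppr0 in h.
have := pf _ h; rewrite (linN lf); lra.
Qed.

Lemma state_of_pos f : linf f -> posf f -> 0 < f e -> is_state le e (fun x => f x / f e).
Proof.
move=> lf pf fe0; have lg : linf (fun x => f x / f e).
  by move=> r x y /=; rewrite lf mulrDl mulrA.
have bd : forall x, `|f x / f e| <= N x.
  move=> x; rewrite normrM normfV (gtr0_norm fe0) ler_pdivrMr //; exact: (pos_bound lf pf (N_ge0 x) (N_bnd x)).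
split => //.
- by exists 1 => a; rewrite mul1r.
- by rewrite mulfV // gt_eqF.
- apply/le_anti/andP; split.
  + apply: ge_sup; first by exists `|f e / f e|, e => //; apply: N_e.
    by move=> _ [a Na <-]; apply: le_trans (bd a) Na.
  + have hs : has_sup [set `|f a / f e| | a in [set a | N a <= 1]].
      split; first by exists `|f e / f e|, e => //; apply: N_e.
      by exists 1 => _ [a Na <-]; apply: le_trans (bd a) Na.
    apply: le_trans (sup_upper_bound hs _); last by exists e => //; apply: N_e.
    by rewrite mulfV ?gt_eqF // normr1.
Qed.

End Pos.


Section St.
Local Notation st := (states le e).

Lemma st_lin mu : st mu -> linf mu. Proof. by case. Qed.
Lemma st_e mu : st mu -> mu e = 1. Proof. by case. Qed.
Lemma st_bd mu : st mu -> exists C : R, forall a, `|mu a| <= C * N a.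
Proof. by case. Qed.

Let LEf := fun a : V => (L a)%:E.

Lemma rho_ub mu nu a : L a <= 1 -> (`|mu a - nu a|%:E <= rho LEf mu nu)%E.
Proof. by move=> La; apply: ereal_sup_ubound; exists a => //=; rewrite /LEf lee_fin. Qed.

Lemma rho_ge0 mu nu : st mu -> st nu -> (0 <= rho LEf mu nu)%E.
Proof.
move=> smu snu; apply: le_trans (rho_ub mu nu (a:=0) _); last by rewrite L0.
by rewrite (lin0 (st_lin smu)) (lin0 (st_lin snu)) subrr normr0.
Qed.

Lemma L_unit a : 0 < L a -> L ((L a)^-1 *: a) = 1.
Proof.
by move=> La; rewrite LZ ger0_norm ?invr_ge0 ?(ltW La) // mulVf // gt_eqF.
Qed.

Lemma rho0_eq mu nu : st mu -> st nu -> rho LEf mu nu = 0%:E -> forall b, mu b = nu b.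
Proof.
move=> smu snu r0.
have H : forall b, L b <= 1 -> mu b = nu b.
  move=> b Lb; have := rho_ub mu nu Lb; rewrite r0 lee_fin => h.
  by apply/eqP; rewrite -subr_eq0 -normr_le0.
move=> b; have [Lb|Lb] := lerP (L b) 1; first exact: H.
have Lb0 : 0 < L b by lra.
have nz : (L b)^-1 != 0 by rewrite invr_eq0 gt_eqF.
have := H ((L b)^-1 *: b); rewrite L_unit // lexx => /(_ isT).
by rewrite (linZ (st_lin smu)) (linZ (st_lin snu)); move/(mulfI nz).
Qed.


Definition Good b := forall mu nu (r : R), st mu -> st nu ->
  rho LEf mu nu = r%:E -> `|mu b - nu b| <= r.

Lemma GoodD b : L b <= 1 -> Good b.
Proof. by move=> Lb mu nu r smu snu hr; have := rho_ub mu nu Lb; rewrite hr lee_fin. Qed.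

Lemma GoodC : norm_closure le e Good `<=` Good.
Proof.
move=> b hb mu nu r smu snu hr.
have [C1 h1] := st_bd smu; have [C2 h2] := st_bd snu.
apply/ler_addgt0Pr => eps eps0.
pose K := `|C1| + `|C2|.
have K0 : 0 <= K by rewrite /K addr_ge0.
pose d := eps / (K + 1).
have d0 : 0 < d by rewrite /d divr_gt0 // ltr_wpDl.
have [b' gb' nb'] := hb d d0.
have lm := st_lin smu; have ln := st_lin snu.
have -> : mu b - nu b = (mu b' - nu b') + (mu (b - b') - nu (b - b')).
  rewrite (linB lm) (linB ln); lra.
have n0 := N_ge0 (b - b').
have e1 : `|mu (b - b')| <= `|C1| * d.
  apply: le_trans (h1 _) _; apply: le_trans (ler_wpM2r n0 (ler_norm C1)) _.
  by apply: ler_wpM2l; [exact: normr_ge0|exact: ltW].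
have e2 : `|nu (b - b')| <= `|C2| * d.
  apply: le_trans (h2 _) _; apply: le_trans (ler_wpM2r n0 (ler_norm C2)) _.
  by apply: ler_wpM2l; [exact: normr_ge0|exact: ltW].
have e3 : K * d <= eps.
  rewrite /d mulrA ler_pdivrMr ?ltr_wpDl //; nra.
have g := gb' mu nu r smu snu hr.
apply: le_trans (ler_normD _ _) _.
apply: le_trans (lerD g (ler_normB _ _)) _.
rewrite /K in e3; lra.
Qed.


Let Lr := L_of_rho le e (rho LEf).

Lemma GoodA b : Good b -> (Lr b <= 1)%E.
Proof.
move=> gb; apply: ge_ereal_sup => q [->|[mu [nu [smu snu _ ->]]]] //.
have := rho_ge0 smu snu.
case hr: (rho LEf mu nu) => [r| |] //= r0; rewrite lee_fin.
rewrite lee_fin in r0; have := gb _ _ _ smu snu hr.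
have [->|rp] := eqVneq r 0; first by rewrite invr0 mulr0.
have rp' : 0 < r by rewrite lt_neqAle eq_sym rp.
by rewrite ler_pdivrMr // mul1r.
Qed.

Lemma GoodB b : (Lr b <= 1)%E -> Good b.
Proof.
move=> hb mu nu r smu snu hr.
have := rho_ge0 smu snu; rewrite hr lee_fin => r0.
have [r00|rp] := eqVneq r 0.
  by rewrite (rho0_eq smu snu) ?subrr ?normr0 // hr r00.
have rp' : 0 < r by rewrite lt_neqAle eq_sym rp.
have [<-|neq] := pselect (mu = nu); first by rewrite subrr normr0.
have : (quot (mu b - nu b) (rho LEf mu nu) <= Lr b)%E.
  by apply: ereal_sup_ubound; right; exists mu, nu; split.
move=> /le_trans /(_ hb); rewrite hr /= lee_fin ler_pdivrMr // mul1r //.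
Qed.

Lemma Lr_ge0 a : (0 <= Lr a)%E.
Proof. by apply: ereal_sup_ubound; left. Qed.

Lemma Lr_le_L a : (Lr a <= (L a)%:E)%E.
Proof.
apply: ge_ereal_sup => q [->|[mu [nu [smu snu _ ->]]]]; first by rewrite lee_fin L_ge0.
have := rho_ge0 smu snu.
case hr: (rho LEf mu nu) => [r| |] //= r0; rewrite ?lee_fin ?L_ge0 //.
rewrite lee_fin in r0.
have [->|rp] := eqVneq r 0; first by rewrite invr0 mulr0 L_ge0.
have rp' : 0 < r by rewrite lt_neqAle eq_sym rp.
rewrite ler_pdivrMr //.
have lm := st_lin smu; have ln := st_lin snu.
have [La0|Lap] := eqVneq (L a) 0.
  have [s ->] := L_ker La0.
  by rewrite (linZ lm) (linZ ln) (st_e smu) (st_e snu) subrr normr0 mulr_ge0 ?L_ge0.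
have Lap' : 0 < L a by rewrite lt_neqAle eq_sym Lap L_ge0.
have := rho_ub mu nu (a := (L a)^-1 *: a); rewrite L_unit // lexx hr lee_fin => /(_ isT).
rewrite (linZ lm) (linZ ln) -mulrBr normrM normfV (gtr0_norm Lap').
by move=> h; rewrite mulrC -(ler_pdivrMr _ _ Lap') mulrC.
Qed.

Lemma Lr_D a b : (Lr (a + b) <= Lr a + Lr b)%E.
Proof.
apply: ge_ereal_sup => q [->|[mu [nu [smu snu neq ->]]]].
  by apply: adde_ge0; apply: Lr_ge0.
have lm := st_lin smu; have ln := st_lin snu.
have -> : mu (a + b) - nu (a + b) = (mu a - nu a) + (mu b - nu b).
  by rewrite (linD lm) (linD ln); lra.
apply: le_trans (quot_D _ _ (rho_ge0 smu snu)) _.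
by apply: leeD; apply: ereal_sup_ubound; right; exists mu, nu.
Qed.

Lemma Lr_Z (t : R) a : Lr (t *: a) = (`|t|%:E * Lr a)%E.
Proof.
rewrite /Lr /L_of_rho -ereal_supZl //; last by apply/set0P; exists 0%E; left.
congr ereal_sup; apply/seteqP; split.
- move=> q [->|[mu [nu [smu snu neq ->]]]].
    by exists 0%E; [left|rewrite mule0].
  exists (quot (mu a - nu a) (rho LEf mu nu)); first by right; exists mu, nu.
  by rewrite -quot_Z (linZ (st_lin smu)) (linZ (st_lin snu)) mulrBr.
- move=> _ [q [->|[mu [nu [smu snu neq ->]]]] <-]; first by left; rewrite mule0.
  right; exists mu, nu; split => //.
  by rewrite -quot_Z (linZ (st_lin smu)) (linZ (st_lin snu)) mulrBr.
Qed.


Lemma cl_mono (A B : set V) : A `<=` B -> norm_closure le e A `<=` norm_closure le e B.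
Proof. by move=> AB a ha d d0; have [b Ab nb] := ha d d0; exists b => //; apply: AB. Qed.

Lemma Lr_lsc : ou_lsc le e Lr.
Proof.
move=> a ha; apply: GoodA; apply: GoodC; apply: cl_mono ha => b; exact: GoodB.
Qed.

Lemma cl_sub : norm_closure le e [set a | L a <= 1] `<=` [set a | (Lr a <= 1)%E].
Proof. move=> a ha; apply: GoodA; apply: GoodC; apply: cl_mono ha => b; exact: GoodD. Qed.

Lemma Lr_fin a : Lr a = (fine (Lr a))%:E.
Proof.
rewrite fineK // ge0_fin_numE ?Lr_ge0 //; apply: le_lt_trans (Lr_le_L a) _.
exact: ltey.
Qed.

Lemma Lr_max M : ext_seminorm M -> ou_lsc le e M -> (forall a, (M a <= (L a)%:E)%E) ->
  [set a | (Lr a <= 1)%E] = norm_closure le e [set a | L a <= 1] ->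
  forall a, (M a <= Lr a)%E.
Proof.
move=> [M0 _ MZ] Mlsc ML P1 a.
have Mfin : forall b, M b = (fine (M b))%:E.
  move=> b; rewrite fineK // ge0_fin_numE ?M0 //; apply: le_lt_trans (ML b) _.
  exact: ltey.
rewrite (Mfin a) (Lr_fin a) lee_fin.
set m := fine (M a); set s := fine (Lr a).
have s0 : 0 <= s by rewrite -lee_fin -Lr_fin Lr_ge0.
rewrite leNgt; apply/negP => sm.
pose c := (s + m) / 2.
have c0 : 0 < c by rewrite /c; lra.
have cm : c < m by rewrite /c; lra.
have h1 : (Lr (c^-1 *: a) <= 1)%E.
  rewrite Lr_Z (Lr_fin a) -EFinM lee_fin ger0_norm ?invr_ge0 ?(ltW c0) //.
  by rewrite mulrC ler_pdivrMr // mul1r /c -/s; lra.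
have h2 : (M (c^-1 *: a) <= 1)%E.
  have sub : [set b | L b <= 1] `<=` [set b | (M b <= 1)%E].
    by move=> b /= Lb; apply: le_trans (ML b) _; rewrite lee_fin.
  apply: Mlsc; apply: (cl_mono sub); by rewrite -P1.
move: h2; rewrite MZ (Mfin a) -EFinM lee_fin ger0_norm ?invr_ge0 ?(ltW c0) //.
rewrite mulrC ler_pdivrMr // mul1r -/m; lra.
Qed.

Lemma rho_eq mu nu : st mu -> st nu -> rho Lr mu nu = rho LEf mu nu.
Proof.
move=> smu snu; apply/le_anti/andP; split.
- apply: ge_ereal_sup => _ [b hb <-].
  have := rho_ge0 smu snu.
  case hr: (rho LEf mu nu) => [r| |] // _; last exact: leey.
  by rewrite lee_fin; apply: (GoodB hb smu snu hr).
- apply: ereal_sup_le => _ [b hb <-]; exists b => //.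
  by apply: le_trans (Lr_le_L b) _.
Qed.

Lemma Lr_sn : ext_seminorm Lr.
Proof. by split; [exact: Lr_ge0|exact: Lr_D|exact: Lr_Z]. Qed.


Lemma N_degen x : ~ le 0 e -> N x = 0.
Proof.
move=> nhe; rewrite /N /ou_norm.
have sub : [set r : R | 0 <= r /\ le (- (r *: e)) x /\ le x (r *: e)] `<=` [set 0].
  move=> r [r0 [h1 h2]]; apply/eqP; rewrite eq_le r0 andbT leNgt; apply/negP => rp.
  apply: nhe; have h := le_addr (r *: e) (le_trans' h1 h2).
  rewrite addNr -scalerDl in h.
  have rr : 0 < r + r by rewrite addr_gt0.
  have ir : 0 <= (r + r)^-1 by rewrite invr_ge0 ltW.
  have h' := le_sc ir h.
  by rewrite scaler0 scalerA mulVf ?gt_eqF // scale1r in h'.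
by have [->|->] := subset_set1 sub; [exact: inf0|exact: inf1].
Qed.

Lemma hard a : (Lr a <= 1)%E -> norm_closure le e [set a | L a <= 1] a.
Proof.
move=> ha eps eps0; apply: contrapT => nex.
have H : forall b, L b <= 1 -> eps <= N (a - b).
  by move=> b Lb; rewrite leNgt; apply/negP => lt; apply: nex; exists b.
have [he|nhe] := pselect (le 0 e); last first.
  apply: nex; exists 0; first by rewrite /= L0.
  by have := N_degen (a - 0) nhe; rewrite /N => ->.
have [ra [ra0 hra]] := bnd_ex he a.
pose al := eps / (2 * (ra + eps + 1)).
have den0 : 0 < 2 * (ra + eps + 1) by rewrite mulr_gt0 //; lra.
have al0 : 0 < al by rewrite /al divr_gt0.
have alE : al * (2 * (ra + eps + 1)) = eps by rewrite /al mulfVK // gt_eqF.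
have ale : 0 < al * eps by rewrite mulr_gt0.
have alra0 : 0 <= al * ra by rewrite mulr_ge0 // ltW.
have alra : al * ra < eps / 2 by lra.
have al1 : al < 1.
  rewrite ltNge; apply/negP => al1; have : eps <= al * eps by rewrite ler_peMl // ltW.
  lra.
pose ka := (1 - al)^-1.
have oa : 0 < 1 - al by lra.
have kainv : ka^-1 = 1 - al by rewrite /ka invrK.
have ka1 : 1 < ka by rewrite /ka invf_gt1 //; lra.
have ka0 : 0 < ka by lra.
pose D := 2 / eps.
have D0 : 0 < D by rewrite /D divr_gt0.
pose U1 := fun (x : V) (m : R) => exists x1 x2 l r,
  [/\ x = x1 + x2 - l *: a, 0 <= l, 0 <= r, bnd r x2 & L x1 + D * r - l * ka <= m].
have Une1 : forall x, exists m, U1 x m.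
  move=> x; exists (L x + D * 0 - 0 * ka), x, 0, 0, 0; split => //.
  - by rewrite scale0r subr0 addr0.
  - exact: bnd0.
have UD1 : forall x y m n, U1 x m -> U1 y n -> U1 (x + y) (m + n).
  move=> x y m n [x1 [x2 [l [r [-> l0 r0 b1 h1]]]]] [y1 [y2 [l' [r' [-> l0' r0' b1' h1']]]]].
  exists (x1 + y1), (x2 + y2), (l + l'), (r + r'); split.
  - by rewrite scalerDl opprD addrACA [x1 + x2 + _]addrACA.
  - by rewrite addr_ge0.
  - by rewrite addr_ge0.
  - exact: bnd_add.
  - have := LD x1 y1; lra.
have UZ1 : forall t x m, 0 < t -> U1 x m -> U1 (t *: x) (t * m).
  move=> t x m t0 [x1 [x2 [l [r [-> l0 r0 b1 h1]]]]].
  exists (t *: x1), (t *: x2), (t * l), (t * r); split.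
  - by rewrite !scalerDr scalerN scalerA.
  - by rewrite mulr_ge0 // ltW.
  - by rewrite mulr_ge0 // ltW.
  - exact: bnd_sc (ltW t0) b1.
  - have := ler_wpM2l (ltW t0) h1; rewrite LZ gtr0_norm //; lra.
have U01 : forall m, U1 0 m -> 0 <= m.
  move=> m [x1 [x2 [l [r [e0 l0 r0 b1 h1]]]]].
  have Dr : 0 <= D * r by rewrite mulr_ge0 // ltW.
  have Lx1 := L_ge0 x1.
  have [l00|lp] := eqVneq l 0; first by rewrite l00 in h1; lra.
  have lp' : 0 < l by rewrite lt_neqAle eq_sym lp.
  rewrite leNgt; apply/negP => m0.
  have lk0 : 0 < l * ka by rewrite mulr_gt0.
  have hlt : L x1 + D * r < l * ka by lra.
  pose y := (l * ka)^-1 *: x1.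
  have Ly : L y <= 1.
    rewrite /y LZ gtr0_norm ?invr_gt0 // ler_pdivrMl // mulr1; lra.
  have ex1 : x1 = l *: a - x2 by apply/eqP; rewrite -subr_eq0 opprB addrA -e0.
  have cf : (l * ka)^-1 * l = 1 - al.
    by rewrite invfM mulrAC mulVf ?gt_eqF // mul1r kainv.
  have eay : a - y = al *: a + (l * ka)^-1 *: x2.
    rewrite /y ex1 scalerBr scalerA cf scalerBl scale1r.
    by rewrite opprD opprK opprB addrA [a + _]addrC subrK.
  have bw : bnd (al * ra + (l * ka)^-1 * r) (a - y).
    by rewrite eay; apply: bnd_add; apply: bnd_sc => //; rewrite ?invr_ge0 ltW.
  have w0 : 0 <= al * ra + (l * ka)^-1 * r.
    by rewrite addr_ge0 // mulr_ge0 // invr_ge0 ltW.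
  have := N_le w0 bw; have := H _ Ly.
  have hr : (l * ka)^-1 * r < eps / 2.
    rewrite ltr_pdivrMl //.
    have : 2 * r < l * ka * eps.
      have Drl : D * r < l * ka by lra.
      by move: Drl; rewrite /D mulrAC ltr_pdivrMr //; lra.
    lra.
  lra.
have [phi [lphi hphi]] := HB_ext Une1 UD1 UZ1 U01.
have pL : forall x, phi x <= L x.
  move=> x; apply: le_trans (hphi x (L x + D * 0 - 0 * ka) _) _; last lra.
  exists x, 0, 0, 0; split => //; [by rewrite scale0r subr0 addr0|exact: bnd0].
have pN : forall x r, 0 <= r -> bnd r x -> phi x <= D * r.
  move=> x r r0 bx; apply: le_trans (hphi x (L 0 + D * r - 0 * ka) _) _.
    by exists 0, x, 0, r; split => //; rewrite scale0r subr0 add0r.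
  rewrite L0; lra.
have pa : ka <= phi a.
  have : phi (- a) <= L 0 + D * 0 - 1 * ka.
    apply: hphi; exists 0, 0, 1, 0; split => //; [by rewrite scale1r !add0r|exact: bnd0].
  rewrite (linN lphi) L0; lra.
have pe : phi e = 0.
  have h1 := pL e; have h2 := pL (- e).
  rewrite (linN lphi) LN in h2; have Le : L e = 0 by rewrite -[e]scale1r L_e.
  rewrite Le in h1 h2; lra.
have pabs : forall x, `|phi x| <= L x.
  move=> x; rewrite ler_norml; apply/andP; split; last exact: pL.
  by have := pL (- x); rewrite (linN lphi) LN; lra.
pose U2 := fun (x : V) (m : R) => exists x1 r1 r2,
  [/\ 0 <= r1, 0 <= r2, le x1 (r1 *: e), le (x - x1) (r2 *: e) &
      D * r1 + phi (x - x1) + D * r2 <= m].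
have Une2 : forall x, exists m, U2 x m.
  move=> x; have [r1 [r10 [_ h1]]] := bnd_ex he x.
  exists (D * r1 + phi (x - x) + D * 0), x, r1, 0; split => //.
  by rewrite subrr scale0r; apply: le_rfl'.
have UD2 : forall x y m n, U2 x m -> U2 y n -> U2 (x + y) (m + n).
  move=> x y m n [x1 [r1 [r2 [r10 r20 h1 h2 hm]]]] [y1 [s1 [s2 [s10 s20 k1 k2 hn]]]].
  have ee : x + y - (x1 + y1) = (x - x1) + (y - y1) by rewrite opprD addrACA.
  exists (x1 + y1), (r1 + s1), (r2 + s2); split.
  - by rewrite addr_ge0.
  - by rewrite addr_ge0.
  - by rewrite scalerDl; apply: leD2.
  - by rewrite ee scalerDl; apply: leD2.
  - rewrite ee (linD lphi); lra.
have UZ2 : forall t x m, 0 < t -> U2 x m -> U2 (t *: x) (t * m).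
  move=> t x m t0 [x1 [r1 [r2 [r10 r20 h1 h2 hm]]]].
  exists (t *: x1), (t * r1), (t * r2); split.
  - by rewrite mulr_ge0 // ltW.
  - by rewrite mulr_ge0 // ltW.
  - by rewrite -scalerA; apply: le_sc => //; apply: ltW.
  - by rewrite -scalerBr -scalerA; apply: le_sc => //; apply: ltW.
  - rewrite -scalerBr (linZ lphi); have := ler_wpM2l (ltW t0) hm; lra.
have U02 : forall m, U2 0 m -> 0 <= m.
  move=> m [x1 [r1 [r2 [r10 r20 h1 h2 hm]]]].
  rewrite sub0r in h2 hm.
  have b : bnd (r1 + r2) x1.
    split.
    - have r2le : r2 <= r1 + r2 by lra.
      have := le_opp (le_trans' h2 (le_emono he r2le)); by rewrite opprK.
    - have r1le : r1 <= r1 + r2 by lra.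
      exact: le_trans' h1 (le_emono he r1le).
  have := pN _ _ (addr_ge0 r10 r20) b; rewrite (linN lphi) in hm; lra.
have [psi [lpsi hpsi]] := HB_ext Une2 UD2 UZ2 U02.
have ppsi : posf psi.
  move=> x hx; apply: le_trans (hpsi x (D * 0 + phi (x - x) + D * 0) _) _.
    exists x, 0, 0; split => //; rewrite ?subrr scale0r //; exact: le_rfl'.
  by rewrite subrr (lin0 lphi); lra.
have ppsi2 : forall x, le x 0 -> psi x <= phi x.
  move=> x hx; apply: le_trans (hpsi x (D * 0 + phi (x - 0) + D * 0) _) _.
    exists 0, 0, 0; split => //; rewrite ?subr0 scale0r //; exact: le_rfl'.
  by rewrite subr0; lra.
pose chi := fun x => psi x - phi x.
have lchi : linf chi by move=> r x y; rewrite /chi lpsi lphi; lra.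
have pchi : posf chi by move=> x hx; rewrite /chi; have := ppsi2 x hx; lra.
have chie : chi e = psi e by rewrite /chi pe subr0.
have t0 : 0 < psi e.
  rewrite lt_neqAle pos_e // andbT; apply/negP => /eqP t0.
  have h1 := pos_bound lpsi ppsi ra0 hra.
  have h2 := pos_bound lchi pchi ra0 hra.
  rewrite chie -t0 mulr0 in h2; rewrite -t0 mulr0 in h1.
  have : phi a = psi a - chi a by rewrite /chi; lra.
  have := normr_ge0 (psi a); have := normr_ge0 (chi a).
  move: h1 h2; rewrite !normr_le0 => /eqP -> /eqP ->; lra.
have smu := state_of_pos he lpsi ppsi t0.
have chi0 : 0 < chi e by rewrite chie.
have snu := state_of_pos he lchi pchi chi0.
set mu := fun x => psi x / psi e in smu.
set nu := fun x => chi x / chi e in snu.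
have rb : (rho LEf mu nu <= ((psi e)^-1)%:E)%E.
  apply: ge_ereal_sup => _ [x /= hx <-]; rewrite /LEf lee_fin in hx.
  rewrite lee_fin /mu /nu chie -mulrBl /chi opprB addrC subrK normrM normfV.
  rewrite (gtr0_norm t0) -[X in _ <= X]mul1r; apply: ler_wpM2r.
    by rewrite invr_ge0 ltW.
  exact: le_trans (pabs x) hx.
have := rho_ge0 smu snu.
case hr: (rho LEf mu nu) => [r| |] // _; last by rewrite hr leye_eq in rb.
have := GoodB ha smu snu hr; rewrite hr lee_fin in rb.
rewrite /mu /nu chie -mulrBl /chi opprB addrC subrK normrM normfV (gtr0_norm t0).
have := ler_norm (phi a).
move=> h1 h2; have : `|phi a| * (psi e)^-1 <= (psi e)^-1 by apply: le_trans h2 rb.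
rewrite -[X in _ <= X]mul1r ler_pM2r ?invr_gt0 //; lra.
Qed.

End St.

End OU.

Unset Implicit Arguments.
Set Strict Implicit.

Theorem theorem4p2 (R : realType) (V : lmodType R) (le : V -> V -> Prop) (e : V)
  (L : V -> R) :
  order_unit_space le e -> lipschitz_seminorm e L ->
  let LE := fun a => (L a)%:E in
  let Lr := L_of_rho le e (rho LE) in
  [/\ [set a | (Lr a <= 1)%E] = norm_closure le e [set a | L a <= 1],
      [/\ ext_seminorm Lr, ou_lsc le e Lr,
          (forall a, (Lr a <= LE a)%E) &
          (forall M : V -> \bar R, ext_seminorm M -> ou_lsc le e M ->
             (forall a, (M a <= LE a)%E) -> forall a, (M a <= Lr a)%E)] &
      (forall mu nu, mu \in states le e -> nu \in states le e ->
         rho Lr mu nu = rho LE mu nu)].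
Proof.
move=> hO hL LE Lr.
have P1 : [set a | (Lr a <= 1)%E] = norm_closure le e [set a | L a <= 1].
  apply/seteqP; split => a ha; [by apply: hard|by apply: cl_sub].
split => //.
- split; [by apply: Lr_sn|by apply: Lr_lsc|by move=> a; apply: Lr_le_L|].
  by move=> M hM hlsc hML; apply: Lr_max.
- by move=> mu nu; rewrite !inE => smu snu; apply: rho_eq.
Qed.
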